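(* Let $n\ge 1$ and let $G=K_{n_1,\dots,n_p}$ be a complete $p$-partite graph of order $2^n$ (so $n_1+\dots+n_p=2^n$, each $n_i\ge 1$). Then $\mathrm{dil}(G,Q_n)=n$ if at least one $n_i$ is odd, and $\mathrm{dil}(G,Q_n)\le n-1$ if all $n_i$ are even. *)

(* Defs.v *)
From mathcomp Require Import all_boot.
Set Implicit Arguments. Unset Strict Implicit. Unset Printing Implicit Defensive.

Definition cube (n : nat) := {ffun 'I_n -> bool}.

(* Distance in Q_n = Hamming distance. *)
Definition hamming (n : nat) (x y : cube n) : nat := #|[set i | x i != y i]|.

(* Dilation of an embedding f of the graph (V, adj) into Q_n:
   maximal Q_n-distance between images of adjacent vertices (0 if no edges). *)
Definition dilation (V : finType) (adj : rel V) (n : nat) (f : V -> cube n) : nat :=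
  \max_(u : V) \max_(v : V | adj u v) hamming (f u) (f v).

(* The default value n only matters if no
   injection exists, which is excluded by the hypotheses of the theorem. *)
Definition dil (V : finType) (adj : rel V) (n : nat) : nat :=
  \big[minn/n]_(f : {ffun V -> cube n} | injectiveb f) dilation adj f.

(* Complete p-partite graph K_{n_1,...,n_p}: vertex (i, k) is the k-th vertex
   of part i; two vertices are adjacent iff they lie in different parts. *)
Definition cmp_vertex (p : nat) (ns : 'I_p -> nat) : finType :=
  {i : 'I_p & 'I_(ns i)}.

Definition cmp_adj (p : nat) (ns : 'I_p -> nat) : rel (cmp_vertex ns) :=
  fun u v => tag u != tag v.
Arguments cmp_adj {p} ns.

(* Main.v *)
Require Import Defs.
From mathcomp Require Import all_boot.
From mathcomp Require Import zify.
Set Implicit Arguments. Unset Strict Implicit.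

Definition compl n (x : cube n) : cube n := [ffun j => ~~ x j].

Lemma complK n : involutive (@compl n).
Proof. by move=> x; apply/ffunP=> j; rewrite !ffunE negbK. Qed.

Lemma hamming_compl n (x : cube n) : hamming x (compl x) = n.
Proof.
rewrite /hamming -[n in RHS]card_ord; apply: eq_card => j.
by rewrite !inE ffunE; case: (x j).
Qed.

Lemma hamming_le n (x y : cube n) j : x j = y j -> hamming x y <= n - 1.
Proof.
move=> e; rewrite /hamming.
have : [set i | x i != y i] \proper [set: 'I_n].
  rewrite properT; apply/eqP=> E.
  by have := in_setT j; rewrite -E inE e eqxx.
move/proper_card; rewrite cardsT card_ord; lia.
Qed.

Lemma card_cube n : #|{: cube n}| = 2 ^ n.
Proof. by rewrite card_ffun card_bool card_ord. Qed.

Lemma card_sig p (T : 'I_p -> nat) : #|{: {i : 'I_p & 'I_(T i)}}| = \sum_(i < p) T i.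
Proof.
rewrite card_tagged sumnE big_map big_enum /=.
by apply: eq_bigr => i _; rewrite card_ord.
Qed.

Lemma le_dilation (V : finType) (adj : rel V) n (f : V -> cube n) u v :
  adj u v -> hamming (f u) (f v) <= dilation adj f.
Proof.
move=> a; rewrite /dilation.
apply: leq_trans (leq_bigmax u).
exact: (leq_bigmax_cond (F := fun v => hamming (f u) (f v))).
Qed.

Lemma part1 n p (ns : 'I_p -> nat) (hn : 1 <= n)
  (hsum : \sum_(i < p) ns i = 2 ^ n) i0 (odd0 : odd (ns i0))
  (f : {ffun cmp_vertex ns -> cube n}) : injective f ->
  n <= dilation (cmp_adj ns) f.
Proof.
move=> finj.
have onto : forall y, exists u, f u = y.
  move=> y; have := inj_card_onto finj.
  rewrite card_cube card_sig hsum leqnn => /(_ isT y) /codomP [u ->].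
  by exists u.
pose P := [set u : cmp_vertex ns | tag u == i0].
pose B := f @: P.
case: (boolP [forall x in B, compl x \in B]) => [/forallP cl | ].
  exfalso.
  have cP : #|P| = ns i0.
    have -> : P = (fun k : 'I_(ns i0) => Tagged (fun i => 'I_(ns i)) k) @: setT.
      apply/setP=> -[i k]; rewrite inE; apply/idP/idP => [/eqP /= ei | /imsetP [k' _ ->]] //.
      by subst i; apply/imsetP; exists k.
    rewrite card_imset ?cardsT ?card_ord // => a b.
    by move/(congr1 (tagged_as (Tagged (fun i => 'I_(ns i)) a))); rewrite !tagged_asE.
  have cB : #|B| = ns i0 by rewrite card_imset.
  pose S := [set x : cube n | x (Ordinal hn)].
  pose B1 := B :&: S.
  pose B0 := B :\: S.
  have e1 : #|B| = #|B1| + #|B0| by rewrite cardsID.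
  have e2 : B0 = @compl n @: B1.
    apply/setP=> x; rewrite /B0 !inE; apply/andP/imsetP.
      move=> [xn xB]; exists (compl x); last by rewrite complK.
      by rewrite /B1 !inE ffunE xn andbT; have := implyP (cl x) xB.
    move=> [y]; rewrite /B1 !inE => /andP[yB yn] ->.
    by rewrite ffunE yn; split => //; have := implyP (cl y) yB.
  have : #|B0| = #|B1| by rewrite e2 card_imset //; apply: inv_inj; exact: complK.
  by move=> e3; move: odd0; rewrite -cB e1 e3 addnn odd_double.
rewrite negb_forall_in => /existsP [x /andP [xB ncx]].
have [u Pu ex] := imsetP xB; subst x.
have [v ev] := onto (compl (f u)).
have : cmp_adj ns u v.
  rewrite /cmp_adj; move: Pu; rewrite inE => /eqP ->.
  apply/eqP=> tv; move: ncx; rewrite -ev; apply/negP/negPn.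
  by apply: imset_f; rewrite inE tv.
move/(le_dilation f); rewrite ev hamming_compl //.
Qed.

Lemma halfo_lt m k : ~~ odd m -> k < m -> k %/ 2 < m %/ 2.
Proof. move=> /negbTE o km. have := modn2 m. rewrite o. lia. Qed.
Lemma par k l : k %/ 2 = l %/ 2 -> odd k = odd l -> k = l.
Proof. move=> e o. have := modn2 k. have := modn2 l. rewrite o. lia. Qed.

Definition halfo m (H : ~~ odd m) (k : 'I_m) : 'I_(m %/ 2) :=
  Ordinal (halfo_lt H (ltn_ord k)).

Lemma part2 n p (ns : 'I_p -> nat)
  (hsum : \sum_(i < p) ns i = 2 ^ n.+1) (hev : forall i, ~~ odd (ns i)) :
  exists f : {ffun cmp_vertex ns -> cube n.+1},
    injective f /\ dilation (cmp_adj ns) f <= n.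
Proof.
pose D := [set x : cube n.+1 | ~~ x ord0].
have cD : #|D| = 2 ^ n.
  have e1 : #|D| + #|~: D| = 2 ^ n.+1 by rewrite cardsC card_cube.
  have e2 : ~: D = @compl n.+1 @: D.
    apply/setP=> x; rewrite !inE; apply/idP/imsetP.
      by move=> xn; exists (compl x); rewrite ?complK // inE ffunE xn.
    by move=> [y]; rewrite inE => yn ->; rewrite ffunE yn.
  move: e1; rewrite e2 card_imset; last by apply: inv_inj; exact: complK.
  rewrite expnS; lia.
pose W := {i : 'I_p & 'I_(ns i %/ 2)}.
have cW : #|{: W}| = #|D|.
  rewrite card_sig cD.
  have : (\sum_(i < p) ns i %/ 2) * 2 = 2 ^ n * 2.
    rewrite big_distrl /= -[2 ^ n * 2]mulnC -expnS -hsum.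
    apply: eq_bigr => i _; rewrite divnK //; by rewrite dvdn2.
  lia.
pose w (u : cmp_vertex ns) : W :=
  Tagged (fun i => 'I_(ns i %/ 2)) (halfo (hev (tag u)) (tagged u)).
pose g (z : W) : 'I_#|D| := cast_ord cW (enum_rank z).
pose h (y : 'I_#|D|) : cube n.+1 := enum_val y.
pose F u := h (g (w u)).
have F0 u : F u ord0 = false.
  have := enum_valP (g (w u)); by rewrite inE /F /h => /negbTE.
have Finj u v : F u = F v -> w u = w v.
  by move/enum_val_inj/cast_ord_inj/enum_rank_inj.
have winj u v : w u = w v -> odd (tagged u) = odd (tagged v) -> u = v.
  case: u v => [i k] [j l] /= e.
  have eij : i = j by have := congr1 tag e.
  subst j; move: e => /(congr1 (tagged_as (Tagged (fun i => 'I_(ns i %/ 2)) (halfo (hev i) k)))).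
  rewrite !tagged_asE => /(congr1 val) /= e o.
  by rewrite (val_inj (par e o)).
pose f : {ffun cmp_vertex ns -> cube n.+1} :=
  [ffun u : cmp_vertex ns => if odd (tagged u) then compl (F u) else F u].
exists f.
have f0 u : f u ord0 = odd (tagged u).
  by rewrite ffunE; case: ifP => _; rewrite ?ffunE F0.
split.
  move=> u v e.
  have o : odd (tagged u) = odd (tagged v) by rewrite -f0 e f0.
  apply: winj => //; apply: Finj; move: e; rewrite !ffunE o.
  by case: ifP => _ // /(congr1 (@compl _)); rewrite !complK.
apply/bigmax_leqP => u _; apply/bigmax_leqP => v a.
suff: hamming (f u) (f v) <= n.+1 - 1 by rewrite subn1.
case: (boolP (odd (tagged u) == odd (tagged v))) => [/eqP o|o].
  by apply: (hamming_le (j := ord0)); rewrite !f0.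
have nF : F u != F v.
  apply/eqP=> /Finj /(congr1 tag) /= /eqP; exact/negP.
case: (pickP (fun j => F u j != F v j)) => [j /= Fj|none]; last first.
  have FE : F u = F v.
    by apply/ffunP=> j; apply/eqP; have := none j; rewrite /= => /negbFE.
  by rewrite FE eqxx in nF.
apply: (hamming_le (j := j)); rewrite !ffunE.
move: o Fj; case: (odd (tagged u)); case: (odd (tagged v)) => //= _;
  rewrite ffunE; case: (F u j); case: (F v j) => //.
Qed.

Lemma bigmin_le (I : eqType) (r : seq I) (P : pred I) (F : I -> nat) x i0 :
  i0 \in r -> P i0 -> \big[minn/x]_(i <- r | P i) F i <= F i0.
Proof.
elim: r => // a r IH; rewrite inE big_cons => /orP [/eqP <- Pa | ir Pi].
  by rewrite Pa geq_minl.
by case: ifP => _; [apply: leq_trans (geq_minr _ _) _ |]; apply: IH.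
Qed.

Theorem mainTheorem4 (n p : nat) (ns : 'I_p -> nat)
  (hn : 1 <= n) (hpos : forall i, 1 <= ns i)
  (hsum : \sum_(i < p) ns i = 2 ^ n) :
  ((exists i, odd (ns i)) -> dil (cmp_adj ns) n = n) /\
  ((forall i, ~~ odd (ns i)) -> dil (cmp_adj ns) n <= n - 1).
Proof.
split.
  move=> [i0 o]; rewrite /dil.
  apply: (big_rec (fun x => x = n)) => // f x /injectiveP fi ->.
  by apply/minn_idPr; apply: (part1 hn hsum o).
move=> hev; case: n hn hsum => // n _ hsum.
have [f [fi fd]] := part2 hsum hev.
rewrite subn1 /=; apply: leq_trans fd; rewrite /dil.
by apply: bigmin_le; [rewrite mem_index_enum | apply/injectiveP].
Qed.
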